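(* Let $(V_o,w_o,\mu_o)$ be a simple weighted graph with adapted weight $\sigma_o$ and adapted path metric $d_{\sigma_o}$, and fix $\bar x\in V_o$. Assume $C_o:=\inf_{x\in V_o}\mu_o(x)>0$ and that every ball $B_{d_{\sigma_o}}(\bar x,r)$ has finite $\mu_o$-measure. Set \[f(r)=\log\mu_o\big(B_{d_{\sigma_o}}(\bar x,r)\big)-\log C_o,\qquad R_n=2^{n+4},\qquad \sigma_n=\frac{1}{f(R_n)+2+\log\log R_n}\qquad(n\in\mathbb N).\] Let $\mathfrak n:E_o\to\mathbb N_+$ be symmetric with $\mathfrak n\ge2$, such that for every $n\in\mathbb N$ and every $e=(x,y)\in E_o$ with $d_{\sigma_o}(x,\bar x)\vee d_{\sigma_o}(y,\bar x)\ge2^{n+2}-1$, \[\mathfrak n(e)\ge f(R_n)+2+\log\log R_n.\] Let $(V,w,\mu)$ be the modified graph with weight $\mathfrak n$, with adapted weight $\sigma$ and path metric $d_\sigma$. Then for every $n\in\mathbb N$, every $e=(x,y)\in E_o^+$ and every $0\le k\le\mathfrak n(e)-1$: if $d_\sigma(x^e_k,\bar x)\vee d_\sigma(x^e_{k+1},\bar x)\ge2^{n+2}$, then $\sigma(x^e_k,x^e_{k+1})\le\sigma_n$.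
   Context: **Weighted graphs.** A simple weighted graph $(V,w,\mu)$ consists of a countably infinite set $V$, a symmetric function $w:V\times V\to[0,\infty)$ and a function $\mu:V\to(0,\infty)$. The graph with edges $\{x\sim y:w(x,y)>0\}$ is assumed to be locally finite, connected, and without loops or multiple edges. **Adapted weights and metrics.** An adapted weight is a symmetric $\sigma:E\to(0,1]$ with $\frac1{\mu(x)}\sum_y w(x,y)\sigma(x,y)^2\le1$ for all $x$. The adapted path metric $d_\sigma(x,y)$ is the infimum of $\sum_i\sigma(x_i,x_{i+1})$ over paths $x=x_0\sim\cdots\sim x_n=y$. Closed balls are $B_d(x,r)=\{y:d(x,y)\le r\}$, and $a\vee b=\max(a,b)$. **Modified graph.** Fix an orientation $E_o^+$ of $E_o$. For $e=(x,y)\in E_o^+$, add distinct new vertices $x^e_1,\dots,x^e_{\mathfrak n(e)-1}$, set $x_0^e=x$, $x^e_{\mathfrak n(e)}=y$, and replace the edge $x\sim y$ by the path $x^e_0\sim\cdots\sim x^e_{\mathfrak n(e)}$. Weights and measure: - $w(x^e_i,x^e_{i+1})=\mathfrak n(e)w_o(e)$, symmetric, and $w=0$ otherwise; - $\mu=\mu_o$ on $V_o$, and $\mu(x^e_i)=2w_o(e)\sigma_o(e)^2/\mathfrak n(e)$; - $\sigma(x^e_i,x^e_{i+1})=\sigma_o(e)/\mathfrak n(e)$. *)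

(* Defs.v *)
From HB Require Import structures.
From mathcomp Require Import all_boot all_order all_algebra.
From mathcomp Require Import all_classical all_reals all_analysis.
Set Implicit Arguments. Unset Strict Implicit. Unset Printing Implicit Defensive.
Import Order.TTheory GRing.Theory Num.Theory.
Local Open Scope classical_set_scope.
Local Open Scope ring_scope.

Definition adj (R : realType) (T : Type) (w : T -> T -> R) : rel T :=
  fun a b => 0 < w a b.

(* sigma-length of the path x = x_0 ~ x_1 ~ ... ~ x_n, p = [:: x_1; ...; x_n] *)
Definition walk_len (R : realType) (T : Type) (s : T -> T -> R) (x : T) (p : seq T) : R :=
  \sum_(ab <- zip (x :: p) p) s ab.1 ab.2.

Definition path_metric (R : realType) (T : Type) (w s : T -> T -> R) (x y : T) : R :=
  inf [set l | exists p : seq T,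
         [/\ path (adj w) x p, last x p = y & l = walk_len s x p]].

Definition simple_weighted_graph (R : realType) (V : countType)
    (w : V -> V -> R) (mu : V -> R) : Prop :=
  infinite_set [set: V] /\
  (forall x y, w x y = w y x) /\ (forall x y, 0 <= w x y) /\
  (forall x, w x x = 0) /\ (forall x, 0 < mu x) /\
  (forall x, finite_set [set y | 0 < w x y]) /\
  (forall x y, exists p : seq V, path (adj w) x p /\ last x p = y).

Definition adapted_weight (R : realType) (V : choiceType)
    (w : V -> V -> R) (mu : V -> R) (s : V -> V -> R) : Prop :=
  (forall x y, 0 < w x y -> s x y = s y x) /\
  (forall x y, 0 < w x y -> 0 < s x y <= 1) /\
  (forall x, (mu x)^-1 * (\sum_(y \in [set y | 0 < w x y]) (w x y * s x y ^+ 2)) <= 1).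

(* ori is an orientation E_o^+ of the edge set: exactly one of (x,y), (y,x) *)
Definition orientation (R : realType) (V : Type) (w : V -> V -> R) (ori : rel V) : Prop :=
  forall x y, (ori x y -> 0 < w x y) /\ (0 < w x y -> ori x y != ori y x).

Definition new_pred (V : Type) (ori : rel V) (nn : V -> V -> nat) : pred (V * V * nat) :=
  fun t => ori t.1.1 t.1.2 && (0 < t.2 < nn t.1.1 t.1.2)%N.

(* new vertices x^e_i, e = (x,y) in E_o^+, 1 <= i <= nn(e) - 1 *)
Definition new_vertex (V : choiceType) (ori : rel V) (nn : V -> V -> nat) :=
  {t : V * V * nat | new_pred ori nn t}.

Definition mvertex (V : choiceType) (ori : rel V) (nn : V -> V -> nat) :=
  (V + new_vertex ori nn)%type.

(* x^e_i for e = (x,y) in E_o^+ and 0 <= i <= nn(e); x^e_0 = x, x^e_{nn(e)} = y *)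
Definition xe (V : choiceType) (ori : rel V) (nn : V -> V -> nat)
    (x y : V) (i : nat) : mvertex ori nn :=
  match @insub _ (new_pred ori nn) (new_vertex ori nn) (x, y, i) with
  | Some v => inr v
  | None => if i == 0%N then inl x else inl y
  end.

(* mlink a b = Some (x,y,i) iff {a,b} = {x^e_i, x^e_{i+1}} with e = (x,y) in E_o^+,
   i.e. a ~ b in the modified graph; None otherwise *)
Definition mlink (V : choiceType) (ori : rel V) (nn : V -> V -> nat)
    (a b : mvertex ori nn) : option (V * V * nat) :=
  match a, b with
  | inr u, inr v =>
      let: (x, y, i) := val u in let: (x', y', j) := val v in
      if (x == x') && (y == y') then
        (if j == i.+1 then Some (x, y, i)
         else if i == j.+1 then Some (x, y, j) else None)
      else None
  | inr u, inl z =>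
      let: (x, y, i) := val u in
      if (i == 1%N) && (z == x) then Some (x, y, 0%N)
      else if (i.+1 == nn x y) && (z == y) then Some (x, y, i) else None
  | inl z, inr u =>
      let: (x, y, i) := val u in
      if (i == 1%N) && (z == x) then Some (x, y, 0%N)
      else if (i.+1 == nn x y) && (z == y) then Some (x, y, i) else None
  | inl z, inl z' =>
      if ori z z' && (nn z z' == 1%N) then Some (z, z', 0%N)
      else if ori z' z && (nn z' z == 1%N) then Some (z', z, 0%N) else None
  end.

Definition mw (R : realType) (V : choiceType) (ori : rel V) (nn : V -> V -> nat)
    (w : V -> V -> R) (a b : mvertex ori nn) : R :=
  match mlink a b with
  | Some (x, y, _) => (nn x y)%:R * w x y
  | None => 0
  end.

Definition mmu (R : realType) (V : choiceType) (ori : rel V) (nn : V -> V -> nat)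
    (w : V -> V -> R) (mu : V -> R) (s : V -> V -> R) (a : mvertex ori nn) : R :=
  match a with
  | inl x => mu x
  | inr u => let: (x, y, _) := val u in 2 * w x y * s x y ^+ 2 / (nn x y)%:R
  end.

(* sigma(x^e_i, x^e_{i+1}) = sigma_o(e) / nn(e) (value off edges irrelevant) *)
Definition msigma (R : realType) (V : choiceType) (ori : rel V) (nn : V -> V -> nat)
    (s : V -> V -> R) (a b : mvertex ori nn) : R :=
  match mlink a b with
  | Some (x, y, _) => s x y / (nn x y)%:R
  | None => 0
  end.

Definition Cinf (R : realType) (V : Type) (mu : V -> R) : R := inf (range mu).

Definition ball_measure (R : realType) (V : choiceType) (w s : V -> V -> R)
    (mu : V -> R) (xbar : V) (r : R) : \bar R :=
  \esum_(y in [set y | (path_metric w s xbar y <= r)%R]) (mu y)%:E.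

Definition fball (R : realType) (V : choiceType) (w s : V -> V -> R)
    (mu : V -> R) (xbar : V) (r : R) : R :=
  ln (fine (ball_measure w s mu xbar r)) - ln (Cinf mu).

Definition Rn (R : realType) (n : nat) : R := 2 ^+ (n + 4).

Definition thr (R : realType) (V : choiceType) (w s : V -> V -> R)
    (mu : V -> R) (xbar : V) (n : nat) : R :=
  fball w s mu xbar (Rn R n) + 2 + ln (ln (Rn R n)).

Definition sigma_n (R : realType) (V : choiceType) (w s : V -> V -> R)
    (mu : V -> R) (xbar : V) (n : nat) : R :=
  1 / thr w s mu xbar n.

(* Main.v *)
Require Import Defs.
From HB Require Import structures.
From mathcomp Require Import all_boot all_order all_algebra.
From mathcomp Require Import all_classical all_reals all_analysis.
From mathcomp Require Import ring lra.
Import Order.TTheory GRing.Theory Num.Theory.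
Local Open Scope classical_set_scope.
Local Open Scope ring_scope.

Lemma walk_len_nil (R : realType) (T : Type) (s : T -> T -> R) x :
  walk_len s x [::] = 0.
Proof. by rewrite /walk_len big_nil. Qed.

Lemma walk_len_cons (R : realType) (T : Type) (s : T -> T -> R) x y p :
  walk_len s x (y :: p) = s x y + walk_len s y p.
Proof. by rewrite /walk_len /= big_cons. Qed.

Lemma walk_len_cat (R : realType) (T : Type) (s : T -> T -> R) x p q :
  walk_len s x (p ++ q) = walk_len s x p + walk_len s (last x p) q.
Proof.
elim: p x => [|y p IH] x /=; first by rewrite walk_len_nil add0r.
by rewrite !walk_len_cons IH addrA.
Qed.

Lemma walk_len_ge0 (R : realType) (T : Type) (w s : T -> T -> R) x p :
  (forall a b, adj w a b -> 0 <= s a b) -> path (adj w) x p ->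
  0 <= walk_len s x p.
Proof.
move=> hs; elim: p x => [|y p IH] x /=; first by rewrite walk_len_nil.
case/andP=> hxy hp; rewrite walk_len_cons addr_ge0 //; [exact: hs | exact: IH].
Qed.

Lemma path_metric_le (R : realType) (T : Type) (w s : T -> T -> R) x y p :
  (forall a b, adj w a b -> 0 <= s a b) -> path (adj w) x p -> last x p = y ->
  path_metric w s x y <= walk_len s x p.
Proof.
move=> hs hp hl; rewrite /path_metric.
apply: (ge_inf (E := [set l | exists p : seq T,
         [/\ path (adj w) x p, last x p = y & l = walk_len s x p]])).
  exists 0 => l [q [hq _ ->]]; exact: walk_len_ge0 hq.
by exists p.
Qed.

Lemma path_metric_approx (R : realType) (T : Type) (w s : T -> T -> R) x y eps :
  (forall a b, adj w a b -> 0 <= s a b) ->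
  (exists p : seq T, path (adj w) x p /\ last x p = y) -> 0 < eps ->
  exists p, [/\ path (adj w) x p, last x p = y &
    walk_len s x p < path_metric w s x y + eps].
Proof.
move=> hs [p0 [hp0 hl0]] he.
set E := [set l | exists p : seq T,
         [/\ path (adj w) x p, last x p = y & l = walk_len s x p]].
have hE : has_inf E.
  split; first by exists (walk_len s x p0), p0.
  exists 0 => l [q [hq _ ->]]; exact: walk_len_ge0 hq.
have [l [q [hq hl ->]] hlt] := inf_adherent he hE.
by exists q.
Qed.

Fixpoint upseq {T : Type} (f : nat -> T) (a m : nat) : seq T :=
  match m with 0 => [::] | m'.+1 => f a.+1 :: upseq f a.+1 m' end.
Fixpoint downseq {T : Type} (f : nat -> T) (a m : nat) : seq T :=
  match m with 0 => [::] | m'.+1 => f (a + m')%N :: downseq f a m' end.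

Lemma upseq_prop (R : realType) (T : Type) (e : rel T) (g : T -> T -> R)
  (f : nat -> T) (N : nat) (c : R) :
  (forall i, (i < N)%N -> e (f i) (f i.+1) /\ g (f i) (f i.+1) = c) ->
  forall a m, (a + m <= N)%N ->
  [/\ path e (f a) (upseq f a m), last (f a) (upseq f a m) = f (a + m)%N &
      walk_len g (f a) (upseq f a m) = m%:R * c].
Proof.
move=> hst a m; elim: m a => [|m IH] a ham /=.
  by rewrite addn0 walk_len_nil mul0r.
have ha : (a < N)%N by apply: leq_trans ham; rewrite addnS ltnS leq_addr.
have [h1 h2] := hst a ha.
have ham' : (a.+1 + m <= N)%N by rewrite addSnnS.
have [p1 p2 p3] := IH a.+1 ham'.
rewrite h1 p1 p2 addSnnS walk_len_cons p3 h2; split => //.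
by rewrite -addn1 natrD mulrDl mul1r addrC.
Qed.

Lemma downseq_prop (R : realType) (T : Type) (e : rel T) (g : T -> T -> R)
  (f : nat -> T) (N : nat) (c : R) :
  (forall i, (i < N)%N -> e (f i.+1) (f i) /\ g (f i.+1) (f i) = c) ->
  forall a m, (a + m <= N)%N ->
  [/\ path e (f (a + m)%N) (downseq f a m), last (f (a + m)%N) (downseq f a m) = f a &
      walk_len g (f (a + m)%N) (downseq f a m) = m%:R * c].
Proof.
move=> hst a m; elim: m => [|m IH] ham /=.
  by rewrite addn0 walk_len_nil mul0r.
have ha : (a + m < N)%N by rewrite -addnS.
have [h1 h2] := hst (a + m)%N ha.
have [p1 p2 p3] := IH (ltnW ha).
rewrite addnS h1 p1 p2 walk_len_cons p3 h2; split => //.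
by rewrite -addn1 natrD mulrDl mul1r addrC.
Qed.

Set Implicit Arguments. Unset Strict Implicit.

Lemma xe0 (V : choiceType) (ori : rel V) (nn : V -> V -> nat) x y :
  xe ori nn x y 0 = inl x.
Proof. by rewrite /xe insubF //= /new_pred /= andbF. Qed.

Lemma xeN (V : choiceType) (ori : rel V) (nn : V -> V -> nat) x y :
  (2 <= nn x y)%N -> xe ori nn x y (nn x y) = inl y.
Proof.
move=> h2; rewrite /xe insubF /=; last by rewrite /new_pred /= ltnn !andbF.
by case: (nn x y) h2.
Qed.

Lemma xe_mid (V : choiceType) (ori : rel V) (nn : V -> V -> nat) x y k :
  ori x y -> (0 < k < nn x y)%N ->
  exists h : new_pred ori nn (x, y, k),
    xe ori nn x y k = inr (exist _ (x, y, k) h).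
Proof.
move=> ho hk.
have h : new_pred ori nn (x, y, k) by rewrite /new_pred /= ho hk.
by exists h; rewrite /xe (insubT (new_pred ori nn) h).
Qed.

Lemma mlink_step (V : choiceType) (ori : rel V) (nn : V -> V -> nat) x y k :
  ori x y -> x != y -> (2 <= nn x y)%N -> (k < nn x y)%N ->
  mlink (xe ori nn x y k) (xe ori nn x y k.+1) = Some (x, y, k) /\
  mlink (xe ori nn x y k.+1) (xe ori nn x y k) = Some (x, y, k).
Proof.
move=> ho hxy h2 hk.
case: k hk => [|k] hk.
  have hk1 : (0 < 1 < nn x y)%N by [].
  have [h ->] := xe_mid ho hk1.
  by rewrite xe0 /mlink /= !eqxx.
case: (ltnP k.+2 (nn x y)) => hk2.
  have hk1 : (0 < k.+1 < nn x y)%N by rewrite /= ltnW.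
  have hk3 : (0 < k.+2 < nn x y)%N by [].
  have [h ->] := xe_mid ho hk1.
  have [h' ->] := xe_mid ho hk3.
  rewrite /mlink /= !eqxx /=.
  by rewrite ltn_eqF.
have hN : k.+2 = nn x y by apply/eqP; rewrite eqn_leq hk hk2.
have hk1 : (0 < k.+1 < nn x y)%N by [].
have [h ->] := xe_mid ho hk1.
rewrite hN xeN // /mlink /= [y == x]eq_sym (negbTE hxy) andbF hN !eqxx /=.
by [].
Qed.

Lemma mlink_ori (V : choiceType) (ori : rel V) (nn : V -> V -> nat) a b x y i :
  @mlink V ori nn a b = Some (x, y, i) -> ori x y.
Proof.
case: a => [z|[[[x0 y0] i0] h0]]; case: b => [z'|[[[x1 y1] i1] h1]];
  rewrite /mlink /=; repeat case: ifP => //; move=> *;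
  match goal with H : Some _ = Some _ |- _ => case: H => *; subst end;
  first [ by case/andP: h0 | by case/andP: h1 |
    match goal with H : is_true (ori _ _ && _) |- _ => by case/andP: H end ].
Qed.

Lemma msigma_ge0 (R : realType) (V : choiceType) (ori : rel V) (nn : V -> V -> nat)
  (w s : V -> V -> R) :
  (forall x y, 0 < w x y -> 0 < s x y <= 1) -> orientation w ori ->
  forall a b, 0 <= @msigma R V ori nn s a b.
Proof.
move=> hs ho a b; rewrite /msigma.
case E: (mlink a b) => [[[x y] i]|] //.
have hxy := (ho x y).1 (mlink_ori E).
have /andP [h1 _] := hs _ _ hxy.
by rewrite divr_ge0 // ltW.
Qed.

Lemma step_props (R : realType) (V : choiceType) (ori : rel V) (nn : V -> V -> nat)
  (w s : V -> V -> R) x y :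
  ori x y -> 0 < w x y -> x != y -> (2 <= nn x y)%N ->
  forall i, (i < nn x y)%N ->
   (adj (mw w) (xe ori nn x y i) (xe ori nn x y i.+1) /\
    msigma s (xe ori nn x y i) (xe ori nn x y i.+1) = s x y / (nn x y)%:R) /\
   (adj (mw w) (xe ori nn x y i.+1) (xe ori nn x y i) /\
    msigma s (xe ori nn x y i.+1) (xe ori nn x y i) = s x y / (nn x y)%:R).
Proof.
move=> ho hw hxy h2 i hi.
have [e1 e2] := mlink_step ho hxy h2 hi.
have hp : 0 < (nn x y)%:R * w x y by rewrite mulr_gt0 // ltr0n; case: (nn x y) h2.
by rewrite /adj /mw /msigma e1 e2.
Qed.


Lemma edge_lift (R : realType) (V : choiceType) (ori : rel V) (nn : V -> V -> nat)
  (w s : V -> V -> R) u v :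
  (forall x y, w x y = w y x) -> (forall x, w x x = 0) ->
  (forall x y, 0 < w x y -> s x y = s y x) ->
  orientation w ori -> (forall x y, 0 < w x y -> (2 <= nn x y)%N) ->
  0 < w u v ->
  exists q, [/\ path (adj (mw w)) (inl u : mvertex ori nn) q,
     last (inl u) q = inl v & walk_len (msigma s) (inl u) q = s u v].
Proof.
move=> wsym w0 ssym hori hnn huv.
have hne : forall x y, 0 < w x y -> x != y.
  by move=> x y hxy; apply/eqP => exy; move: hxy; rewrite exy w0 ltxx.
have [_ hd] := hori u v.
case hou: (ori u v) (hd huv) => /= hov.
  have h2 := hnn _ _ huv.
  have hst := step_props s hou huv (hne _ _ huv) h2.
  have [p1 p2 p3] := @upseq_prop R _ (adj (mw w)) (msigma s) (xe ori nn u v)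
    (nn u v) (s u v / (nn u v)%:R) (fun i hi => (@hst i hi).1) 0 (nn u v) (leqnn _).
  exists (upseq (xe ori nn u v) 0 (nn u v)).
  rewrite !xe0 in p1 p2 p3; rewrite add0n xeN // in p2.
  split; [exact: p1 | exact: p2 |].
  have hN : (nn u v)%:R != 0 :> R by rewrite pnatr_eq0 -lt0n ltnW.
  by rewrite p3 mulrC (divfK hN).
have hvu : 0 < w v u by rewrite wsym.
have hov' : ori v u by move: hov; case: (ori v u).
have h2 := hnn _ _ hvu.
have hst := step_props s hov' hvu (hne _ _ hvu) h2.
have [p1 p2 p3] := @downseq_prop R _ (adj (mw w)) (msigma s) (xe ori nn v u)
  (nn v u) (s v u / (nn v u)%:R) (fun i hi => (@hst i hi).2) 0 (nn v u) (leqnn _).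
exists (downseq (xe ori nn v u) 0 (nn v u)).
rewrite add0n xeN // in p1 p2 p3; rewrite xe0 in p2.
split; [exact: p1 | exact: p2 |].
have hN : (nn v u)%:R != 0 :> R by rewrite pnatr_eq0 -lt0n ltnW.
by rewrite p3 mulrC (divfK hN) ssym.
Qed.


Lemma path_lift (R : realType) (V : choiceType) (ori : rel V) (nn : V -> V -> nat)
  (w s : V -> V -> R) :
  (forall x y, w x y = w y x) -> (forall x, w x x = 0) ->
  (forall x y, 0 < w x y -> s x y = s y x) ->
  orientation w ori -> (forall x y, 0 < w x y -> (2 <= nn x y)%N) ->
  forall u p, path (adj w) u p ->
  exists q, [/\ path (adj (mw w)) (inl u : mvertex ori nn) q,
     last (inl u) q = inl (last u p) & walk_len (msigma s) (inl u) q = walk_len s u p].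
Proof.
move=> wsym w0 ssym hori hnn u p; elim: p u => [|v p IH] u /=.
  by move=> _; exists [::]; rewrite walk_len_nil walk_len_nil.
case/andP => huv hp.
have [q1 [a1 b1 c1]] := @edge_lift _ _ _ _ _ s _ _ wsym w0 ssym hori hnn huv.
have [q2 [a2 b2 c2]] := IH v hp.
exists (q1 ++ q2); rewrite cat_path last_cat walk_len_cat b1 a1 a2 b2 c1 c2.
by rewrite walk_len_cons.
Qed.

Unset Implicit Arguments. Set Strict Implicit.

Lemma ln16 (R : realType) : 1 <= ln (16 : R).
Proof.
have h4 : (0 : R) < 4 by [].
have h := @le_ln1Dx R (- (3/4)) ltac:(lra).
have e : 1 + - (3/4) = (4 : R)^-1 by field.
rewrite e lnV ?posrE // in h.
have -> : (16 : R) = 4 * 4 by rewrite -natrM.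
rewrite lnM ?posrE //; lra.
Qed.

Lemma lnRn_ge1 (R : realType) n : 1 <= ln (Rn R n).
Proof.
apply: le_trans (ln16 R) _.
have h16 : (16 : R) <= Rn R n.
  rewrite /Rn exprD.
  have -> : (2 : R) ^+ 4 = 16 by rewrite -natrX.
  have := @exprn_ege1 R n 2 ltac:(lra). move=> h; nra.
rewrite ler_ln ?posrE //; apply: lt_le_trans h16; lra.
Qed.

Theorem lemma4p1 (R : realType) (V : countType) (w : V -> V -> R) (mu : V -> R)
    (s : V -> V -> R) (xbar : V) (ori : rel V) (nn : V -> V -> nat) :
  simple_weighted_graph w mu ->
  adapted_weight w mu s ->
  0 < Cinf mu ->
  (forall r : R, (ball_measure w s mu xbar r < +oo)%E) ->
  orientation w ori ->
  (forall x y, 0 < w x y -> nn x y = nn y x) ->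
  (forall x y, 0 < w x y -> (2 <= nn x y)%N) ->
  (forall (n : nat) (x y : V), 0 < w x y ->
     2 ^+ (n + 2) - 1 <= Num.max (path_metric w s x xbar) (path_metric w s y xbar) ->
     thr w s mu xbar n <= (nn x y)%:R) ->
  forall (n : nat) (x y : V) (k : nat),
    ori x y -> (k <= nn x y - 1)%N ->
    2 ^+ (n + 2) <=
      Num.max (path_metric (mw w) (msigma s) (xe ori nn x y k) (inl xbar))
              (path_metric (mw w) (msigma s) (xe ori nn x y k.+1) (inl xbar)) ->
    msigma s (xe ori nn x y k) (xe ori nn x y k.+1) <= sigma_n w s mu xbar n.
Proof.
move=> [_ [wsym [_ [w0 [mupos [_ conn]]]]]] [ssym [spos _]] hC hfin hori _ hnn2
  hthr n x y k hoxy hk hmax.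
have hxy : 0 < w x y := (hori x y).1 hoxy.
have hne : x != y by apply/eqP => exy; move: hxy; rewrite exy w0 ltxx.
have h2 := hnn2 _ _ hxy.
have hkN : (k < nn x y)%N.
  by apply: leq_ltn_trans hk _; rewrite ltn_subrL; case: (nn x y) h2.
have hs_adj : forall a b, adj w a b -> 0 <= s a b.
  by move=> a b hab; have /andP [h _] := spos _ _ hab; exact: ltW.
have /andP [sxy0 sxy1] := spos _ _ hxy.
have hst := @step_props _ _ _ _ _ s _ _ hoxy hxy hne h2.
have hNpos : (0 : R) < (nn x y)%:R by rewrite ltr0n; case: (nn x y) h2.
have D : forall j, (j <= nn x y)%N ->
    path_metric (mw w) (msigma s) (xe ori nn x y j) (inl xbar) <=
    1 + path_metric w s x xbar.
  move=> j hj; apply/ler_addgt0Pr => eps he.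
  have [p [hp hl hlt]] := @path_metric_approx _ _ w s x xbar eps hs_adj (conn x xbar) he.
  have [q [hq hlq hwq]] := @path_lift _ _ ori nn _ s wsym w0 ssym hori hnn2 x p hp.
  have [d1 d2 d3] := @downseq_prop R _ (adj (mw w)) (msigma s) (xe ori nn x y)
    (nn x y) (s x y / (nn x y)%:R) (fun i hi => (@hst i hi).2) 0 j hj.
  rewrite add0n xe0 in d1 d2 d3.
  have hpath : path (adj (mw w)) (xe ori nn x y j) (downseq (xe ori nn x y) 0 j ++ q).
    by rewrite cat_path d1 d2 hq.
  have hlast : last (xe ori nn x y j) (downseq (xe ori nn x y) 0 j ++ q) = inl xbar.
    by rewrite last_cat d2 hlq hl.
  have := @path_metric_le _ _ (mw w) (msigma s) _ _ _ (fun a b _ => @msigma_ge0 R V ori nn w s spos hori a b) hpath hlast.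
  rewrite walk_len_cat d2 d3 hwq.
  have hj1 : j%:R * (s x y / (nn x y)%:R) <= 1.
    apply: le_trans (_ : (nn x y)%:R * (s x y / (nn x y)%:R) <= 1).
      by rewrite ler_wpM2r ?ler_nat // divr_ge0 // ltW.
    by rewrite mulrC divfK // gt_eqF.
  move=> h; apply: le_trans h _; lra.
have hd : 2 ^+ (n + 2) - 1 <= path_metric w s x xbar.
  have := le_trans hmax (_ : _ <= 1 + path_metric w s x xbar).
  move=> h; have {}h := h ltac:(rewrite ge_max D ?D //; exact: ltnW).
  lra.
have hd2 : 2 ^+ (n + 2) - 1 <=
    Num.max (path_metric w s x xbar) (path_metric w s y xbar) by rewrite le_max hd.
have hT := hthr n x y hxy hd2.
have hRn0 : (0 : R) <= Rn R n by rewrite /Rn exprn_ge0.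
have hin : path_metric w s xbar xbar <= Rn R n.
  apply: le_trans (@path_metric_le _ _ w s xbar xbar [::] hs_adj erefl erefl) _.
  by rewrite walk_len_nil.
have hBM : ((mu xbar)%:E <= ball_measure w s mu xbar (Rn R n))%E.
  apply: esum_ge; exists [set xbar]; last by rewrite fsbig_set1.
  split; first exact: finite_set1.
  by move=> z ->.
have hCmu : Cinf mu <= mu xbar.
  have hlb : has_lbound (range mu).
    by exists 0 => r [z _ <-]; exact: ltW.
  by apply: (ge_inf hlb); exists xbar.
have hfine : mu xbar <= fine (ball_measure w s mu xbar (Rn R n)).
  move: hBM (hfin (Rn R n)).
  by case: (ball_measure w s mu xbar (Rn R n)) => [r| |] //= h _; rewrite -lee_fin.
have hf : 0 <= fball w s mu xbar (Rn R n).
  rewrite /fball subr_ge0 ler_ln ?posrE //; first exact: le_trans hfine.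
  by apply: lt_le_trans hfine.
have hll : 0 <= ln (ln (Rn R n)) by apply: ln_ge0; exact: lnRn_ge1.
have hT0 : 0 < thr w s mu xbar n by rewrite /thr; lra.
have [[_ e1] _] := hst k hkN.
rewrite e1 /sigma_n div1r.
apply: le_trans (_ : (nn x y)%:R^-1 <= _).
  by rewrite -[X in _ <= X]mul1r ler_wpM2r // invr_ge0 ltW.
by rewrite lef_pV2 ?posrE.
Qed.
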